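(* Let $d\ge 1$ and $k'$ be integers with $k'>2d+3$. Consider an average-based EQ AHG or an average-based AL AHG over $n$ players with $n\ge k'(d+1)$, whose network of friends $G$ contains a (possibly pinched) $(d,k')$-dome gadget on a player set $P$, such that no player of $P$ other than its top player $p^\star$ has a friend outside $P$. Let $\Gamma$ be a coalition structure with $P\in\Gamma$. If a coalition $C$ blocks $\Gamma$, then $C$ contains no player of the base clique of the gadget.
   Context: An AHG is given by a finite player set $N$, $n=|N|$, and a simple undirected graph $G=(N,\mathcal{E})$ (network of friends). For $i\in N$, $F_i$ is the set of neighbors (friends) of $i$ and $E_i=N\setminus(F_i\cup\{i\})$ its enemies. For a coalition $C\ni i$, $\mathrm{val}_i(C)=n|F_i\cap C|-|E_i\cap C|$. Let $\mathrm{avg}_{F_i}(C)=\sum_{c\in C\cap F_i}\mathrm{val}_c(C)/|C\cap F_i|$ (taken to be $0$ if $C\cap F_i=\emptyset$) and $\mathrm{avg}_{F_i\cup\{i\}}(C)=\sum_{c\in (C\cap F_i)\cup\{i\}}\mathrm{val}_c(C)/|(C\cap F_i)\cup\{i\}|$. With a fixed constant $w\ge n^4$, the average-based EQ utility is $\mathrm{util}_i^{\text{avg-EQ}}(C)=\mathrm{avg}_{F_i\cup\{i\}}(C)$ and the average-based AL utility is $\mathrm{util}_i^{\text{avg-AL}}(C)=\mathrm{val}_i(C)+w\cdot\mathrm{avg}_{F_i}(C)$. A coalition structure is a partition $\Gamma$ of $N$; $\Gamma(i)$ is the coalition containing $i$. A nonempty coalition $C$ blocks $\Gamma$ if every $i\in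 C$ has strictly larger utility from $C$ than from $\Gamma(i)$. A $(d,k')$-dome gadget (for integers $d\ge1$, $k'>2d+1$) on player set $P$ with $|P|=k'$ consists of a top player $p^\star$, $d$ mid players $p_1,\dots,p_d$, and the remaining $k'-d-1$ players forming the base clique $K$; $d$ distinct players $p'_1,\dots,p'_d\in K$ are called fringe players. The friendships among players of $P$ are exactly: $p^\star$ with each $p_j$, $p_j$ with $p'_j$ for each $j$, and every pair of players in $K$. A pinched $(d,k')$-dome gadget is obtained from a $(d,k')$-dome gadget by identifying all $d$ mid players into a single mid player $q$; so its friendships within $P$ are exactly $p^\star$ with $q$, $q$ with each $p'_j$, and every pair within the base clique $K$ (of size $k'-d-1$). ''$G$ contains the gadget on $P$'' means $G[P]$ is exactly this gadget. *)

(* Defs.v *)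
From mathcomp Require Import all_boot all_order all_algebra.
Set Implicit Arguments. Unset Strict Implicit. Unset Printing Implicit Defensive.
Import Order.TTheory GRing.Theory Num.Theory.
Local Open Scope ring_scope.

Section AHG.
Variable T : finType.
Variable e : rel T.

Definition friends (i : T) : {set T} := [set j | e i j].
Definition enemies (i : T) : {set T} := [set j | ~~ e i j & j != i].

Definition val (i : T) (C : {set T}) : rat :=
  ((#|T| * #|friends i :&: C|)%N)%:R - (#|enemies i :&: C|)%:R.

Definition avg_over (S C : {set T}) : rat :=
  if S == set0 then 0 else (\sum_(c in S) val c C) / (#|S|)%:R.

Definition avgF (i : T) (C : {set T}) : rat := avg_over (C :&: friends i) C.
Definition avgFi (i : T) (C : {set T}) : rat :=
  avg_over (i |: (C :&: friends i)) C.

Inductive ahg_kind := AvgEQ | AvgAL.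

Definition util (k : ahg_kind) (w : rat) (i : T) (C : {set T}) : rat :=
  match k with
  | AvgEQ => avgFi i C
  | AvgAL => val i C + w * avgF i C
  end.

Definition blocks (k : ahg_kind) (w : rat) (Gamma : {set {set T}}) (C : {set T}) :=
  C != set0 /\ forall i, i \in C -> util k w i (pblock Gamma i) < util k w i C.

(* (d,k')-dome gadget on P with top p and base clique K:
   mids m j, fringes f j ∈ K, |K| = k' - d - 1, P = {p} ∪ mids ∪ K (disjoint),
   and G[P] is exactly the gadget. *)
Definition dome_gadget (d k' : nat) (P : {set T}) (p : T) (K : {set T}) : Prop :=
  exists (m f : 'I_d -> T),
    injective m /\ injective f /\
    (forall j, m j != p /\ m j \notin K /\ f j \in K) /\
    p \notin K /\ #|K| = (k' - d - 1)%N /\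
    P = p |: ([set m j | j : 'I_d] :|: K) /\
    (forall x y, x \in P -> y \in P ->
          e x y = [|| (x == p) && (y \in [set m j | j : 'I_d]),
                      (y == p) && (x \in [set m j | j : 'I_d]),
                      [exists j, (x == m j) && (y == f j)],
                      [exists j, (y == m j) && (x == f j)] |
                      [&& x \in K, y \in K & x != y]]).

(* pinched (d,k')-dome gadget: all mids identified into a single mid q *)
Definition pinched_dome_gadget (d k' : nat) (P : {set T}) (p : T) (K : {set T}) : Prop :=
  exists (q : T) (f : 'I_d -> T),
    injective f /\ q != p /\ q \notin K /\ p \notin K /\
    (forall j, f j \in K) /\ #|K| = (k' - d - 1)%N /\
    P = p |: (q |: K) /\
    (forall x y, x \in P -> y \in P ->
          e x y = [|| (x == p) && (y == q), (y == p) && (x == q),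
                      (x == q) && (y \in [set f j | j : 'I_d]),
                      (y == q) && (x \in [set f j | j : 'I_d]) |
                      [&& x \in K, y \in K & x != y]]).

End AHG.

(* Main.v *)
Require Import Defs.
From mathcomp Require Import all_boot all_order all_algebra.
From mathcomp Require Import zify ring lra.
Section A.
Variables (n d K1 N1 : nat).
Hypotheses (hd : (1 <= d)%N) (hk : (d + 2 <= K1)%N) (hN : (N1 <= K1 + d + 1)%N) (hn : ((K1+d+2)*(d+1) <= n)%N).

Let hn1 : (2*(d+2) <= n+1)%N. Proof. nia. Qed.
Let hn2 : ((d+1)*(K1+1) <= n+1)%N. Proof. nia. Qed.
Let hn3 : (N1 < n+1)%N. Proof. nia. Qed.

Definition eqb S E C1 := ((n+1)*((S+1)*S+E)*(K1+1) + (K1+1)*N1*(S+1) <= (n+1)*((K1+1)*K1+d)*(S+1) + (S+1)*C1*(K1+1))%N.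

Lemma eqb1 C1 : (N1 <= C1)%N -> eqb K1 d C1.
Proof. rewrite /eqb => h.
have := leq_mul (leq_mul (leqnn (K1+1)) h) (leqnn (K1+1)). lia. Qed.

Lemma eqb2 E C1 : (E + 1 <= d)%N -> (K1 <= C1)%N -> eqb K1 E C1.
Proof. rewrite /eqb => h1 h2.
have h4 : (N1 * (K1+1) <= (K1 + d+ 1)*(K1+1))%N by apply: leq_mul.
have h5 : ((n+1)*(E + 1) <= (n+1)*d)%N by apply: leq_mul.
have h6 : (K1 * (K1+1) <= C1 * (K1+1))%N by apply: leq_mul.
have inner : ((n+1)*E + N1*(K1+1) <= (n+1)*d + C1*(K1+1))%N by lia.
have := leq_mul inner (leqnn (K1+1)). lia. Qed.

Lemma eqb3 S E C1 : (S + 2 <= K1)%N -> (E <= S)%N -> (S <= C1)%N -> eqb S E C1.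
Proof. rewrite /eqb => h1 h2 h3.
have a : ((n+1)*((S+1)*S+E) <= (n+1)*(S*(S+2)))%N by apply: leq_mul => //; lia.
have b : ((n+1)*(S*(S+2) + (S+1)) <= (n+1)*(K1*(S+1)))%N.
  apply: leq_mul => //. have := leq_mul h1 (leqnn (S+1)). lia.
have c : (N1*(S+1) <= (n+1)*(S+1))%N by apply: leq_mul => //; lia.
have inner : ((n+1)*((S+1)*S+E) + N1*(S+1) <= (n+1)*(K1*(S+1)))%N by lia.
have := leq_mul inner (leqnn (K1+1)). lia. Qed.

Lemma eqb4 S E C1 : (S + 1 = K1)%N -> (E <= d)%N -> (S <= C1)%N -> eqb S E C1.
Proof. rewrite /eqb => h1 h2 h3. subst K1.
set X := ((S+1)*(S+2))%N.
have hX : (2*d <= X)%N by rewrite /X; nia.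
have p1 : (X * (2*(d+2)) <= X*(n+1))%N by apply: leq_mul.
have p2 : ((2*d)*(n+1) <= X*(n+1))%N by apply: leq_mul.
have p3 : ((n+1)*(E*(S+2)) <= (n+1)*(d*(S+2)))%N by apply: leq_mul => //; apply: leq_mul.
have p4 : (X*N1 <= X*(C1 + d + 2))%N by apply: leq_mul => //; lia.
rewrite /X in p1 p2 p4. lia. Qed.

Lemma eqb_all S E C1 : (S + 1 <= K1 + 1)%N -> (E <= d)%N -> (E <= S)%N -> (S <= C1)%N ->
  (S = K1 -> E = d -> N1 <= C1)%N -> eqb S E C1.
Proof.
move=> h1 h2 h3 h4 h5.
have [hS|hS] := leqP (S+2) K1; first exact: eqb3.
have [hS'|hS'] := eqVneq S K1.
  subst S. have [hE|hE] := eqVneq E d; first by subst E; apply: eqb1; exact: h5.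
  apply: eqb2 => //. lia.
apply: eqb4 => //. lia.
Qed.

Definition alb S E C1 := ((n+1)*(S*S+E)*K1 + K1*N1*S < (n+1)*(K1*K1+d)*S + S*C1*K1)%N.

Lemma alb1 E C1 : (E + 1 <= d)%N -> (K1 <= C1)%N -> alb K1 E C1.
Proof. rewrite /alb => h1 h2.
have h4 : (N1 * K1 <= (K1 + d+ 1)*K1)%N by apply: leq_mul.
have h5 : ((n+1)*(E + 1) <= (n+1)*d)%N by apply: leq_mul.
have h6 : (K1 * K1 <= C1 * K1)%N by apply: leq_mul.
have inner : ((n+1)*E + N1*K1 < (n+1)*d + C1*K1)%N by lia.
have : ((n+1)*E + N1*K1) * K1 < ((n+1)*d + C1*K1) * K1 by rewrite ltn_pmul2r; [exact: inner|lia].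
lia. Qed.

Lemma alb2 S E C1 : (1 <= S)%N -> (S + 2 <= K1)%N -> (E <= S)%N -> alb S E C1.
Proof. rewrite /alb => h0 h1 h2.
have a : ((n+1)*(S*S+E) <= (n+1)*(S*(S+1)))%N by apply: leq_mul => //; lia.
have b : ((n+1)*(S+2) <= (n+1)*K1)%N by apply: leq_mul.
have inner : ((n+1)*(S+1) + N1 < (n+1)*K1)%N by lia.
have : ((n+1)*(S+1) + N1) * (S*K1) < ((n+1)*K1) * (S*K1) by rewrite ltn_pmul2r; [exact: inner|nia].
have := leq_mul a (leqnn K1).
have : (S*C1*K1 >= 0)%N by [].
lia. Qed.


Lemma alb3 S E C1 : (S + 1 = K1)%N -> (E <= d)%N -> (S <= C1)%N -> alb S E C1.
Proof. rewrite /alb => h1 h2 h3. subst K1.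
set X := (S*(S+1))%N.
have hX : (2*d+1 <= X)%N by rewrite /X; nia.
have p1 : (X * (2*(d+2)) <= X*(n+1))%N by apply: leq_mul.
have p2 : ((2*d+1)*(n+1) <= X*(n+1))%N by apply: leq_mul.
have p3 : ((n+1)*(E*(S+1)) <= (n+1)*(d*(S+1)))%N by apply: leq_mul => //; apply: leq_mul.
have p4 : (X*N1 <= X*(C1 + d + 2))%N by apply: leq_mul => //; lia.
rewrite /X in p1 p2 p4. lia. Qed.

Lemma alb_all S E C1 : (1 <= S)%N -> (S <= K1)%N -> (E <= d)%N -> (E <= S)%N -> (S <= C1)%N ->
  (S < K1 \/ E < d)%N -> alb S E C1.
Proof.
move=> h0 h1 h2 h3 h4 h5.
have [hS|hS] := leqP (S+2) K1; first exact: alb2.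
have [hS'|hS'] := eqVneq S K1.
  subst S. apply: alb1 => //. case: h5; lia.
apply: alb3 => //. lia.
Qed.

Lemma EQc : (n*(d+1)*(K1+2) + (K1+1)*N1 + N1 < (n+1)*((K1+1)*K1+d) + (n+1))%N.
Proof.
have h2: ((d+1)*(K1+2) + (K1+1) <= (K1+1)*K1 + d + 1)%N by nia.
have h4: ((K1+2)*N1 <= n*(K1+1))%N.
  have : ((K1+2)*N1 <= (K1+2)*(K1+d+1))%N by apply: leq_mul.
  have : (2*(K1+d+2)*(K1+1) <= n*(K1+1))%N by apply: leq_mul => //; nia.
  nia.
have h5 := leq_mul (leqnn n) h2.
lia. Qed.

Lemma ALc : (n*(d+1)*(K1+1) + (K1+1)*N1 + (n+1)*(K1+1) < (n+1)*((K1+1)*K1+d) + (n+1))%N.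
Proof.
have h2: ((K1+1)*(d+2) + (K1-1) <= (K1+1)*K1 + d + 1)%N by nia.
have h4: ((K1+1)*N1 <= n*(K1-1))%N.
  have : ((K1+1)*N1 <= (K1+1)*(K1+d+1))%N by apply: leq_mul.
  have : (2*(K1+d+2)*(K1-1) <= n*(K1-1))%N by apply: leq_mul => //; nia.
  nia.
have h5 := leq_mul (leqnn n) h2.
lia. Qed.
End A.


Lemma EQb' n d k N s E c : (1 <= d)%N -> (d + 3 <= k)%N -> (N <= k + d + 1)%N -> (1 <= N)%N ->
  ((k+d+1)*(d+1) <= n)%N ->
  (1 <= s <= k)%N -> (s <= c)%N -> (E <= d)%N -> (E <= s - 1)%N ->
  (s = k -> E = d -> N <= c)%N ->
  ((n+1)*(s*(s-1)+E)*k + k*(N-1)*s <= (n+1)*(k*(k-1)+d)*s + s*(c-1)*k)%N.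
Proof.
move=> hd hk hN hN1 hn /andP[h1 h2] h3 h4 h5 h6.
have [S eS] : exists S, s = S.+1 by exists s.-1; lia.
have [K1 eK] : exists K1, k = K1.+1 by exists k.-1; lia.
have [C1 eC] : exists C1, c = C1.+1 by exists c.-1; lia.
have [N1 eN] : exists N1, N = N1.+1 by exists N.-1; lia.
subst. rewrite !subn1 /= in h5 *.
have := @eqb_all n d K1 N1 ltac:(lia) ltac:(lia) ltac:(lia) ltac:(nia) S E C1
  ltac:(lia) h4 h5 ltac:(lia) ltac:(move=> a b; have := h6 ltac:(lia) b; lia).
rewrite /eqb. lia.
Qed.

Lemma ALb' n d k N s E c : (1 <= d)%N -> (d + 3 <= k)%N -> (N <= k + d + 1)%N -> (1 <= N)%N ->
  ((k+d+1)*(d+1) <= n)%N ->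
  (2 <= s <= k)%N -> (s <= c)%N -> (E <= d)%N -> (E <= s - 1)%N ->
  (s < k \/ E < d)%N ->
  ((n+1)*((s-1)*(s-1)+E)*(k-1) + (k-1)*(N-1)*(s-1) < (n+1)*((k-1)*(k-1)+d)*(s-1) + (s-1)*(c-1)*(k-1))%N.
Proof.
move=> hd hk hN hN1 hn /andP[h1 h2] h3 h4 h5 h6.
have [S eS] : exists S, s = S.+1 by exists s.-1; lia.
have [K1 eK] : exists K1, k = K1.+1 by exists k.-1; lia.
have [C1 eC] : exists C1, c = C1.+1 by exists c.-1; lia.
have [N1 eN] : exists N1, N = N1.+1 by exists N.-1; lia.
subst. rewrite !subn1 /= in h5 *.
have := @alb_all n d K1 N1 ltac:(lia) ltac:(lia) ltac:(lia) ltac:(nia) S E C1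
  ltac:(lia) ltac:(lia) h4 h5 ltac:(lia) ltac:(lia).
rewrite /alb. lia.
Qed.

Lemma EQc' n d k N : (1 <= d)%N -> (d + 3 <= k)%N -> (N <= k + d + 1)%N -> (1 <= N)%N ->
  ((k+d+1)*(d+1) <= n)%N ->
  (n*(d+1)*(k.+1) + (N-1) + k*(N-1) < (n+1) + (n+1)*(k*(k-1)+d))%N.
Proof.
move=> hd hk hN hN1 hn.
have [K1 eK] : exists K1, k = K1.+1 by exists k.-1; lia.
have [N1 eN] : exists N1, N = N1.+1 by exists N.-1; lia.
subst. rewrite !subn1 /=.
have := @EQc n d K1 N1 ltac:(lia) ltac:(lia) ltac:(lia) ltac:(nia). lia.
Qed.

Lemma ALc' n d k N : (1 <= d)%N -> (d + 3 <= k)%N -> (N <= k + d + 1)%N -> (1 <= N)%N ->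
  ((k+d+1)*(d+1) <= n)%N ->
  (n*(d+1)*k + (N-1) + k*(N-1) + (n+1)*((k-1)+1) < (n+1) + (n+1)*(k*(k-1)+d) + (N-1))%N.
Proof.
move=> hd hk hN hN1 hn.
have [K1 eK] : exists K1, k = K1.+1 by exists k.-1; lia.
have [N1 eN] : exists N1, N = N1.+1 by exists N.-1; lia.
subst. rewrite !subn1 /=.
have := @ALc n d K1 N1 ltac:(lia) ltac:(lia) ltac:(lia) ltac:(nia). lia.
Qed.

Set Implicit Arguments. Unset Strict Implicit. Unset Printing Implicit Defensive.
Import Order.TTheory GRing.Theory Num.Theory.
Local Open Scope ring_scope.

Notation vl := Defs.val.

Lemma cross_le (X Y X' Y' a b : nat) : (0 < a)%N -> (0 < b)%N -> (X*b + Y'*a <= X'*a + Y*b)%N ->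
  (X%:R - Y%:R) / a%:R <= (X'%:R - Y'%:R) / b%:R :> rat.
Proof.
move=> a0 b0 h. rewrite ler_pdivrMr ?ltr0n // mulrAC ler_pdivlMr ?ltr0n // !mulrBl -!natrM.
move: h; rewrite -(ler_nat rat) !natrD. lra.
Qed.

Lemma cross_lt (X Y X' Y' a b : nat) : (0 < a)%N -> (0 < b)%N -> (X*b + Y'*a < X'*a + Y*b)%N ->
  (X%:R - Y%:R) / a%:R < (X'%:R - Y'%:R) / b%:R :> rat.
Proof.
move=> a0 b0 h. rewrite ltr_pdivrMr ?ltr0n // mulrAC ltr_pdivlMr ?ltr0n // !mulrBl -!natrM.
move: h; rewrite -(ltr_nat rat) !natrD. lra.
Qed.

Lemma natsub4 (A B C D A' B' : nat) : (A + D + B' = A' + B + C)%N ->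
  A%:R - B%:R - (C%:R - D%:R) = A'%:R - B'%:R :> rat.
Proof. move/(congr1 (fun m => m%:R : rat)); rewrite !natrD. lra. Qed.

Section Gen.
Variables (T : finType) (e : rel T).
Hypotheses (hsym : symmetric e) (eirr : irreflexive e).
Local Notation n := #|T|.

Lemma friends_C1 (i : T) (C : {set T}) : friends e i :&: C \subset [set~ i].
Proof. apply/subsetP => z; rewrite !inE => /andP[hz _]; apply: contraTneq hz => ->; by rewrite eirr. Qed.

Lemma enemies_C1 (i : T) (C : {set T}) : enemies e i :&: C \subset [set~ i].
Proof. apply/subsetP => z; rewrite !inE => /andP[/andP[_ hz] _]; exact: hz. Qed.

Lemma val_in (i : T) (C : {set T}) : i \in C ->
  vl e i C = (((n + 1) * #|friends e i :&: C|)%N)%:R - (#|C| - 1)%:R.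
Proof.
move=> iC.
have hF : friends e i :&: C = (C :\ i) :&: friends e i.
  apply/setP => z; rewrite !inE; case: (boolP (e i z)) => hz; last by rewrite !andbF.
  have : z != i by apply: contraTneq hz => ->; rewrite eirr.
  by move=> ->; rewrite andbT.
have hE : enemies e i :&: C = (C :\ i) :\: friends e i.
  apply/setP => z; rewrite !inE; by case: (e i z); case: (z == i); case: (z \in C).
have h1 := cardsID (friends e i) (C :\ i).
have h2 := cardsD1 i C. rewrite iC in h2.
rewrite /vl /Defs.val hF hE.
have -> : (#|C| - 1)%N = (#|(C :\ i) :&: friends e i| + #|(C :\ i) :\: friends e i|)%N by lia.
rewrite !natrD !natrM. ring.
Qed.

Lemma val_le (i : T) (C : {set T}) : vl e i C <= ((n * #|friends e i :&: C|)%N)%:R.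
Proof. rewrite /vl /Defs.val lerBlDr lerDl; exact: ler0n. Qed.

Lemma val_ge (i : T) (C : {set T}) : - ((n - 1)%N)%:R <= vl e i C.
Proof.
rewrite /vl /Defs.val. have h := subset_leq_card (enemies_C1 i C). rewrite cardsC1 in h.
have : ((#|enemies e i :&: C|)%:R <= ((n-1)%N)%:R :> rat) by rewrite ler_nat; lia.
have : (0 <= ((n * #|friends e i :&: C|)%N)%:R :> rat) by exact: ler0n.
lra.
Qed.

Lemma val_le2 (i : T) (C : {set T}) : vl e i C <= ((n * (n - 1))%N)%:R.
Proof.
apply: le_trans (val_le i C) _. rewrite ler_nat.
have h := subset_leq_card (friends_C1 i C). rewrite cardsC1 in h.
apply: leq_mul => //; lia.
Qed.

Lemma avg_le (S C : {set T}) B : 0 <= B -> (forall c, c \in S -> vl e c C <= B) -> avg_over e S C <= B.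
Proof.
move=> B0 hB; rewrite /avg_over; case: ifP => // hS.
have h0 : (0 < #|S|)%N by rewrite card_gt0 hS.
rewrite ler_pdivrMr ?ltr0n //.
apply: le_trans (_ : \sum_(c in S) B <= _).
  by apply: ler_sum => c cS; apply: hB.
by rewrite sumr_const mulr_natr.
Qed.

Lemma avg_gt (S C : {set T}) B : S != set0 -> (forall c, c \in S -> B < vl e c C) -> B < avg_over e S C.
Proof.
move=> hS hB; rewrite /avg_over (negbTE hS).
have h0 : (0 < #|S|)%N by rewrite card_gt0 hS.
rewrite ltr_pdivlMr ?ltr0n //.
have [z zS] := set0Pn _ hS.
have -> : B * #|S|%:R = \sum_(c in S) B by rewrite sumr_const mulr_natr.
apply: ltr_sum; last by move=> c cS; apply: hB.
by apply/hasP; exists z; rewrite ?mem_index_enum.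
Qed.

Lemma avg_sum (S C : {set T}) : S != set0 -> avg_over e S C = (\sum_(c in S) vl e c C) / (#|S|)%:R.
Proof. by rewrite /avg_over => /negbTE ->. Qed.

Lemma val_int (i : T) (C : {set T}) : vl e i C = (((n * #|friends e i :&: C|)%N)%:Z - (#|enemies e i :&: C|)%:Z)%:~R.
Proof. by rewrite /vl /Defs.val rmorphB. Qed.

Lemma avg_int (S C : {set T}) : (0 < n)%N -> exists (X : int) (a : nat), (0 < a <= n)%N /\ avg_over e S C = X%:~R / a%:R.
Proof.
move=> n0; rewrite /avg_over; case: ifP => hS.
  by exists 0, 1%N; rewrite mul0r; split => //; lia.
exists (\sum_(c in S) (((n * #|friends e c :&: C|)%N)%:Z - (#|enemies e c :&: C|)%:Z)), #|S|.
split; first by rewrite card_gt0 hS max_card.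
rewrite rmorph_sum /=; congr (_ / _); apply: eq_bigr => c _; exact: val_int.
Qed.

Lemma avg_gran (S1 C1 S2 C2 : {set T}) : (0 < n)%N ->
  avg_over e S1 C1 < avg_over e S2 C2 ->
  1 <= (avg_over e S2 C2 - avg_over e S1 C1) * ((n * n)%N)%:R.
Proof.
move=> n0.
have [X1 [a1 [ha1 ->]]] := avg_int S1 C1 n0.
have [X2 [a2 [ha2 ->]]] := avg_int S2 C2 n0.
have a1p : (0 : rat) < a1%:R by rewrite ltr0n; lia.
have a2p : (0 : rat) < a2%:R by rewrite ltr0n; lia.
have eq : X2%:~R / a2%:R - X1%:~R / a1%:R = (X2 * a1%:Z - X1 * a2%:Z)%:~R / ((a1 * a2)%N)%:R :> rat.
  rewrite rmorphB /= !rmorphM /= -!pmulrn. field. by rewrite !gt_eqF.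
rewrite eq => hlt.
have hZ : (0 : rat) < (X2 * a1%:Z - X1 * a2%:Z)%:~R.
  have h := hlt; rewrite -subr_gt0 eq in h.
  move: h; rewrite pmulr_lgt0 // invr_gt0 ltr0n; nia.
have hZ1 : (1 : rat) <= (X2 * a1%:Z - X1 * a2%:Z)%:~R.
  move: hZ; rewrite -[0]/(0%:~R) -[1]/(1%:~R) ltr_int ler_int. lia.
set Z := (X2 * a1%:Z - X1 * a2%:Z)%:~R : rat in hZ hZ1 *.
have ha : (0 : rat) < ((a1 * a2)%N)%:R by rewrite ltr0n; nia.
rewrite mulrAC ler_pdivlMr // mul1r.
apply: le_trans (_ : ((n * n)%N)%:R <= _).
  rewrite ler_nat; apply: leq_mul; lia.
by rewrite ler_peMl // ler0n.
Qed.


Lemma AL_lt w (i : T) (C D : {set T}) : (0 < n)%N -> ((n ^ 4)%N)%:R <= w ->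
  avgF e i C < avgF e i D -> util e AvgAL w i C < util e AvgAL w i D.
Proof.
move=> n0 hw hlt; rewrite /util.
have g := avg_gran n0 hlt.
move: hlt g; rewrite /avgF.
set u := avg_over e _ C; set v := avg_over e _ D => hlt g.
have vC := val_le2 i C; have vD := val_ge i D.
have hvu : 0 <= v - u by rewrite subr_ge0 ltW.
have h1 : ((n * n)%N)%:R <= w * (v - u).
  apply: le_trans (_ : ((n ^ 4)%N)%:R * (v - u) <= _); last exact: ler_wpM2r.
  have -> : ((n ^ 4)%N)%:R = ((n * n)%N)%:R * ((n * n)%N)%:R :> rat.
    by rewrite -natrM; congr (_%:R); lia.
  rewrite -mulrA; apply: ler_peMr; [exact: ler0n | by rewrite mulrC].
have h2 : ((n * (n - 1))%N)%:R + ((n - 1)%N)%:R < ((n * n)%N)%:R :> rat.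
  by rewrite -natrD ltr_nat; nia.
lra.
Qed.
End Gen.


Section Gadget.
Variables (T : finType) (e : rel T).
Hypotheses (hsym : symmetric e) (eirr : irreflexive e).
Local Notation n := #|T|.
Variables (P K Fr : {set T}) (p : T) (mu : T -> T) (d : nat).
Hypotheses (hpP : p \in P) (hKP : K \subset P) (hpK : p \notin K) (hFrK : Fr \subset K)
  (hFrd : #|Fr| = d)
  (hE : forall y z, y \in K -> z \in P -> e y z = ((z \in K) && (z != y)) || ((y \in Fr) && (z == mu y)))
  (hmu : forall y, y \in Fr -> [/\ mu y \in P, mu y \notin K, mu y != p & e (mu y) p])
  (hmid : forall z, z \in P -> z != p -> z \notin K -> exists2 y, y \in Fr & z = mu y)
  (hmidF : forall z u, z \in P -> z != p -> z \notin K -> u \in P -> e z u -> (u == p) || (u \in Fr))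
  (hout : forall x y, x \in P -> x != p -> e x y -> y \in P).

Lemma ar1 (a c m : nat) (b : bool) : (a = true + c)%N -> (a <= m)%N -> (c + b <= m + 1)%N.
Proof. case: b; lia. Qed.

Lemma ar_k2 m k : (m + 3 <= k)%N -> (2 <= k)%N. Proof. lia. Qed.
Lemma ar2 m N k (b : bool) : (N <= m)%N -> (2 <= k)%N -> (N - 1 < (m+1)*((k-1)+b))%N.
Proof. case: b; nia. Qed.

Lemma ar3 a b : (a < b)%N -> (a <= b - 1)%N. Proof. lia. Qed.

Lemma ar4 a m : (a = true + m)%N -> (2 <= a)%N -> (0 < m)%N. Proof. lia. Qed.
Lemma ar5 m : (1 = true + m)%N -> m = 0%N. Proof. lia. Qed.

Lemma ar7 a m : (a = true + m)%N -> m = (a - 1)%N. Proof. lia. Qed.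
Lemma ar8 m s c E : (1 <= s)%N -> ((m+1)*(s*(s-1)+E) + (c-1) + (s-1)*(c-1) = (m+1)*((s-1)*(s-1)+E) + s*(c-1) + (m+1)*(s-1))%N.
Proof. case: s => [|S] // _; rewrite subn1 /=. ring. Qed.
Lemma ar9 a : (2 <= a)%N -> (0 < a - 1)%N. Proof. lia. Qed.

Lemma ar10 a : (1 <= a)%N -> (true + (a - 1))%N = a. Proof. lia. Qed.
Lemma ar11 m a : (m + 3 <= a)%N -> (0 < a)%N. Proof. lia. Qed.

Lemma inKP y : y \in K -> y \in P. Proof. by move/(subsetP hKP). Qed.
Lemma Kp y : y \in K -> y != p. Proof. by apply: contraTneq => ->. Qed.
Lemma FrK y : y \in Fr -> y \in K. Proof. by move/(subsetP hFrK). Qed.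

Lemma eK y z : y \in K -> z \in K -> e y z = (z != y).
Proof.
move=> hy hz; rewrite hE ?inKP // hz /=.
case: (boolP (y \in Fr)) => hf; last by rewrite orbF.
have [_ hm _ _] := hmu hf.
case: (eqVneq z (mu y)) => [ez|]; last by rewrite orbF.
by rewrite -ez hz in hm.
Qed.

Lemma eout y z : y \in K -> z \notin K -> e y z = (y \in Fr) && (z == mu y).
Proof.
move=> hy hz; case: (boolP (z \in P)) => zP; first by rewrite hE // (negbTE hz).
have -> : e y z = false.
  apply/negbTE/negP => eyz; move: zP; by rewrite (hout (inKP hy) (Kp hy) eyz).
case: (boolP (y \in Fr)) => //= hf.
have [hm _ _ _] := hmu hf.
by apply/esym/negP => /eqP ez; rewrite ez hm in zP.
Qed.

Definition ex (C : {set T}) y := (y \in Fr) && (mu y \in C).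

Lemma card_fr y (C : {set T}) : y \in K ->
  #|friends e y :&: C| = (#|(C :&: K) :\ y| + ex C y)%N.
Proof.
move=> hy; rewrite -(cardsID K (friends e y :&: C)).
have -> : friends e y :&: C :&: K = (C :&: K) :\ y.
  apply/setP => z; rewrite !inE.
  case: (boolP (z \in K)) => hz; last by rewrite !andbF.
  by rewrite eK // !andbT.
have -> : friends e y :&: C :\: K = if ex C y then [set mu y] else set0.
  apply/setP => z; rewrite !inE.
  case: (boolP (z \in K)) => hz /=.
    case: ifP => hex; rewrite ?inE //.
    move: hex; rewrite /ex => /andP[hf _]; have [_ hm _ _] := hmu hf.
    apply/esym/negbTE; apply: contraTneq hz => ->; exact: hm.
  rewrite eout // /ex.
  case: (eqVneq z (mu y)) => [->|hne].
    by case: (y \in Fr); case: (mu y \in C); rewrite /= ?inE ?eqxx.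
  by rewrite andbF /=; case: ifP; rewrite ?inE // (negbTE hne).
by case: (ex C y); rewrite ?cards1 ?cards0.
Qed.

Lemma val_K y (C : {set T}) : y \in C -> y \in K ->
  vl e y C = (((n + 1) * ((#|C :&: K| - 1) + ex C y))%N)%:R - (#|C| - 1)%:R.
Proof.
move=> yC yK; rewrite val_in // card_fr //.
have := cardsD1 y (C :&: K); rewrite inE yC yK /= => h.
congr (_%:R - _); congr (_ * (_ + _))%N; lia.
Qed.

Definition Bs (C : {set T}) := [set y in C :&: K | ex C y].

Lemma sum_K (C : {set T}) :
  \sum_(y in C :&: K) vl e y C =
  (((n + 1) * (#|C :&: K| * (#|C :&: K| - 1) + #|Bs C|))%N)%:R - ((#|C :&: K| * (#|C| - 1))%N)%:R.
Proof.
rewrite (eq_bigr (fun y => (((n + 1) * ((#|C :&: K| - 1) + ex C y))%N)%:R - (#|C| - 1)%:R)); last first.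
  by move=> y; rewrite inE => /andP[yC yK]; rewrite val_K.
rewrite sumrB sumr_const -natr_sum -big_distrr big_split sum_nat_const /=.
have -> : (\sum_(i in C :&: K) ex C i)%N = #|Bs C|.
  rewrite /Bs -sum1dep_card big_mkcondr; apply: eq_bigr => y _; by case: (ex C y).
by congr (_ - _); rewrite -mulrnA mulnC.
Qed.

Lemma Bs_le_d (C : {set T}) : (#|Bs C| <= d)%N.
Proof.
rewrite -hFrd; apply: subset_leq_card; apply/subsetP => y; rewrite !inE /ex.
by case/andP => _ /andP[].
Qed.

Lemma Bs_le_s (C : {set T}) x : x \in C -> x \in K -> x \notin Fr -> (#|Bs C| <= #|C :&: K| - 1)%N.
Proof.
move=> xC xK xF.
have := cardsD1 x (C :&: K); rewrite inE xC xK /= => h.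
have : (#|Bs C| <= #|(C :&: K) :\ x|)%N.
  apply: subset_leq_card; apply/subsetP => y; rewrite !inE /ex.
  case/andP => /andP[yC yK] /andP[yF _]; rewrite yC yK !andbT.
  by apply: contraNneq xF => <-.
lia.
Qed.

Lemma PKI : P :&: K = K. Proof. by apply/setIidPr. Qed.

Lemma Bs_P : #|Bs P| = d.
Proof.
rewrite -hFrd; congr #|pred_of_set _|; apply/setP => y; rewrite !inE /ex.
case: (boolP (y \in Fr)) => hf; rewrite ?andbF //.
have [hm _ _ _] := hmu hf. by rewrite hm inKP ?FrK.
Qed.

Lemma Bs_full (C : {set T}) : #|Bs C| = d -> forall y, y \in Fr -> mu y \in C.
Proof.
move=> hc.
have sub : Bs C \subset Fr by apply/subsetP => y; rewrite !inE /ex; case/andP => _ /andP[].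
have : Bs C == Fr by rewrite eqEcard sub hc hFrd leqnn.
move/eqP => eqB y hy; move: hy; rewrite -eqB !inE /ex.
by case/andP => _ /andP[].
Qed.

Lemma exc (C : {set T}) : C :&: K = K -> (forall y, y \in Fr -> mu y \in C) ->
  (#|C| <= #|P| - 1)%N -> C = P :\ p.
Proof.
move=> hCK hmuC hc.
have sub : P :\ p \subset C.
  apply/subsetP => z; rewrite !inE => /andP[zp zP].
  case: (boolP (z \in K)) => zK.
    by move: zK; rewrite -hCK inE => /andP[].
  have [y hy ->] := hmid zP zp zK. exact: hmuC.
have := cardsD1 p P; rewrite hpP /= => h.
apply/esym/eqP; rewrite eqEcard sub /=. lia.
Qed.

Lemma setF_nf (C : {set T}) x : x \in C -> x \in K -> x \notin Fr -> C :&: friends e x = (C :&: K) :\ x.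
Proof.
move=> xC xK xF; apply/setP => z; rewrite !inE.
case: (boolP (z \in K)) => zK; first by rewrite eK // andbT andbC.
by rewrite eout // (negbTE xF) !andbF.
Qed.

Lemma setFi_nf (C : {set T}) x : x \in C -> x \in K -> x \notin Fr -> x |: (C :&: friends e x) = C :&: K.
Proof.
move=> xC xK xF; rewrite setF_nf //; apply: setD1K; by rewrite inE xC xK.
Qed.

Lemma setF_fr x : x \in Fr -> P :&: friends e x = mu x |: (K :\ x).
Proof.
move=> xF; have xK := FrK xF; have [hm hmK _ _] := hmu xF.
apply/setP => z; rewrite !inE.
case: (boolP (z \in K)) => zK.
  rewrite eK // inKP //= andbT.
  case: (eqVneq z (mu x)) => [ez|] //=. by rewrite -ez zK in hmK.
rewrite eout // xF /= !andbF !orbF.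
case: (eqVneq z (mu x)) => [->|] //=; by rewrite ?andbF ?andbT.
Qed.

Lemma setFi_fr x : x \in Fr -> x |: (P :&: friends e x) = mu x |: K.
Proof.
move=> xF; rewrite setF_fr // setUCA setD1K //; exact: FrK.
Qed.

Lemma fr_bound (C : {set T}) x : x \in C -> x \in Fr -> C :&: K \subset Fr ->
  forall z, z \in x |: (C :&: friends e x) -> vl e z C <= ((n * (d + 1))%N)%:R.
Proof.
move=> xC xF hsub z.
have hs : (#|C :&: K| <= d)%N by rewrite -hFrd; apply: subset_leq_card.
have xK := FrK xF.
have Hbound : forall z, z \in C -> z \in K -> vl e z C <= ((n * (d + 1))%N)%:R.
  move=> z' z'C z'K; apply: le_trans (val_le _ _ _) _; rewrite ler_nat; apply: leq_mul => //.
  rewrite card_fr //.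
  have := cardsD1 z' (C :&: K); rewrite inE z'C z'K => h.
  by move: h hs; apply: ar1.
rewrite !inE => /orP[/eqP ->|/andP[zC ezx]]; first exact: Hbound.
case: (boolP (z \in K)) => zK; first exact: Hbound.
move: ezx; rewrite eout // xF /= => /eqP ->.
have [hm hmK hmp _] := hmu xF.
apply: le_trans (val_le _ _ _) _; rewrite ler_nat; apply: leq_mul => //.
have : friends e (mu x) :&: C \subset p |: (C :&: K).
  apply/subsetP => u; rewrite !inE => /andP[eu uC].
  have uP := hout hm hmp eu.
  have := hmidF hm hmp hmK uP eu.
  case/orP => [->//|uF]. by rewrite uC (FrK uF) orbT.
move/subset_leq_card; rewrite cardsU1 => h.
apply: leq_trans h _; rewrite addnC; apply: leq_add => //; exact: leq_b1.
Qed.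

Lemma val_rm i : i \in P -> i != p ->
  vl e i (P :\ p) = vl e i P + 1 - (((n + 1) * e i p)%N)%:R.
Proof.
move=> iP ip.
have iP' : i \in P :\ p by rewrite !inE ip.
rewrite !val_in //.
have -> : friends e i :&: (P :\ p) = (friends e i :&: P) :\ p.
  by apply/setP => z; rewrite !inE; case: (z == p); case: (e i z); case: (z \in P).
have h1 := cardsD1 p (friends e i :&: P).
rewrite !inE hpP andbT in h1.
have h2 := cardsD1 p P; rewrite hpP in h2.
have h3 := cardsD1 i (P :\ p); rewrite iP' in h3.
set a := #|(friends e i :&: P) :\ p| in h1 *.
set b := e i p in h1 *.
have -> : #|friends e i :&: P| = (b + a)%N by [].
have E1 : (((n + 1) * (b + a))%N)%:R = (((n + 1) * a)%N)%:R + (((n + 1) * b)%N)%:R :> rat.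
  by rewrite -natrD mulnDr addnC.
have E2 : ((#|P| - 1)%N)%:R = ((#|P :\ p| - 1)%N)%:R + 1 :> rat.
  by rewrite -[1]/(1%:R) -natrD; congr _%:R; lia.
rewrite E1 E2. lra.
Qed.


Hypotheses (hd : (1 <= d)%N) (hk : (d + 3 <= #|K|)%N) (hN : (#|P| <= #|K| + d + 1)%N)
  (hn : ((#|K| + d + 1) * (d + 1) <= n)%N).

Set Printing Width 200.
Theorem gadget_main kind w (Gamma : {set {set T}}) (C : {set T}) :
  ((n ^ 4)%N)%:R <= w -> partition Gamma [set: T] -> P \in Gamma ->
  blocks e kind w Gamma C -> [disjoint C & K].
Proof.
move=> hw hpart hPG [hC0 hblk].
rewrite -setI_eq0; case: (eqVneq (C :&: K) set0) => // hne; exfalso.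
have [x0 hx0] := set0Pn _ hne.
have n0 : (0 < n)%N by apply/card_gt0P; exists x0.
have triv : trivIset Gamma by case/and3P: hpart.
have Hb : forall x, x \in C -> x \in K -> util e kind w x P < util e kind w x C.
  move=> x xC xK; have := hblk x xC; by rewrite (def_pblock triv hPG (inKP xK)).
suff [x [xC xK hle]] : exists x, [/\ x \in C, x \in K & util e kind w x C <= util e kind w x P].
  by have := Hb x xC xK; rewrite ltNge hle.
have hw0 : 0 <= w by apply: le_trans hw; exact: ler0n.
have NP1 : (1 <= #|P|)%N by rewrite card_gt0; apply/set0Pn; exists p.
have hsumP : \sum_(y in K) vl e y P =
   (((n + 1) * (#|K| * (#|K| - 1) + d))%N)%:R - ((#|K| * (#|P| - 1))%N)%:R.
  by rewrite -{1}PKI sum_K PKI Bs_P.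
have hK0 : K != set0 by rewrite -card_gt0; apply: leq_trans hk; rewrite addnS.
case: (eqVneq C (P :\ p)) => [hCe|hCne].
  have [x xF] : exists x, x \in Fr by apply/set0Pn; rewrite -card_gt0 hFrd.
  have xK := FrK xF; have [hm hmK hmp hmpe] := hmu xF.
  have xC : x \in C by rewrite hCe !inE (Kp xK) (inKP xK).
  exists x; split => //; apply: ltW.
  have exp : e x p = false by rewrite eout // xF /= eq_sym (negbTE hmp).
  have hFx : C :&: friends e x = P :&: friends e x.
    rewrite hCe; apply/setP => z; rewrite !inE.
    case: (eqVneq z p) => [->|] //=; by rewrite exp andbF.
  have emx : e x (mu x) by rewrite hE ?hm // xF eqxx orbT.
  have key : forall S : {set T}, S \subset P :\ p -> mu x \in S ->
      \sum_(z in S) vl e z C < \sum_(z in S) vl e z P.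
    move=> S hS hmS; rewrite hCe.
    rewrite (eq_bigr (fun z => vl e z P + 1 - (((n + 1) * e z p)%N)%:R)); last first.
      move=> z zS; have := subsetP hS z zS; rewrite !inE => /andP[zp zP]; exact: val_rm.
    have H3 : ((n + 1)%N)%:R <= \sum_(z in S) (((n + 1) * e z p)%N)%:R :> rat.
      rewrite (bigD1 (mu x)) //= hmpe muln1 lerDl.
      by apply: sumr_ge0 => *; exact: ler0n.
    have H4 : (#|S|%:R <= n%:R :> rat) by rewrite ler_nat max_card.
    rewrite sumrB big_split /= sumr_const -[1 *+ _]/(#|S|%:R).
    move: H3; rewrite natrD. lra.
  have xPp : x \in P :\ p by rewrite !inE (Kp xK) (inKP xK).
  have sub1 : P :&: friends e x \subset P :\ p.
    apply/subsetP => z; rewrite !inE => /andP[zP ez]; rewrite zP andbT.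
    by apply: contraTneq ez => ->; rewrite exp.
  have mS1 : mu x \in P :&: friends e x by rewrite !inE hm emx.
  case: kind {Hb hblk} => /=.
    rewrite /avgFi hFx.
    have sub2 : x |: (P :&: friends e x) \subset P :\ p by rewrite subUset sub1 andbT sub1set.
    have mS2 : mu x \in x |: (P :&: friends e x) by rewrite setU1r.
    have ne : x |: (P :&: friends e x) != set0 by apply/set0Pn; exists x; rewrite setU11.
    rewrite !avg_sum // ltr_pM2r ?invr_gt0 ?ltr0n ?card_gt0 //; exact: key.
  apply: (AL_lt eirr) => //; rewrite /avgF hFx.
  have ne : P :&: friends e x != set0 by apply/set0Pn; exists (mu x).
  rewrite !avg_sum // ltr_pM2r ?invr_gt0 ?ltr0n ?card_gt0 //; exact: key.
have hK1 : (1 <= #|K|)%N by rewrite card_gt0.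
have hNP : (1 <= #|P|)%N := NP1.
have hvK : forall z, z \in K -> 0 < vl e z P.
  move=> z zK; rewrite val_K ?inKP // PKI subr_gt0 ltr_nat.
  apply: ar2; [exact: max_card | exact: ar_k2 hk].
have [hB|hB] := boolP [exists x in C :&: K, x \notin Fr].
  have [x hx xF] := exists_inP hB.
  move: (hx); rewrite inE => /andP[xC xK].
  exists x; split => //.
  have hs1 : (1 <= #|C :&: K|)%N by rewrite card_gt0.
  have hsk : (#|C :&: K| <= #|K|)%N by apply: subset_leq_card; apply: subsetIr.
  have hsc : (#|C :&: K| <= #|C|)%N by apply: subset_leq_card; apply: subsetIl.
  have hEd := Bs_le_d C.
  have hEs := Bs_le_s xC xK xF.
  have hexc : (#|C :&: K| = #|K| -> #|Bs C| = d -> #|P| <= #|C|)%N.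
    move=> h1 h2; rewrite leqNgt; apply/negP => hlt.
    have hCK : C :&: K = K by apply/eqP; rewrite eqEcard subsetIr h1 leqnn.
    have := exc hCK (Bs_full h2) (ar3 hlt). by move/eqP: hCne.
  have ex0 : forall D, ex D x = false by move=> D; rewrite /ex (negbTE xF).
  case: kind {Hb hblk} => /=.
    rewrite /avgFi setFi_nf // (setFi_nf (C:=P)) ?inKP // PKI !avg_sum // sum_K hsumP.
    apply: cross_le; [by [] | by rewrite card_gt0 |].
    by apply: EQb' => //; rewrite hs1 hsk.
  have eF := setF_nf xC xK xF.
  have eFP := setF_nf (inKP xK) xK xF; rewrite PKI in eFP.
  have hKx : K :\ x != set0.
    rewrite -card_gt0; have := cardsD1 x K; rewrite xK => h.
    exact: ar4 h (ar_k2 hk).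
  have [s1|s2] := eqVneq #|C :&: K| 1%N.
    apply: ltW; apply: (AL_lt eirr) => //; rewrite /avgF eF eFP.
    have -> : (C :&: K) :\ x = set0.
      apply/eqP; rewrite -cards_eq0; have := cardsD1 x (C :&: K); rewrite hx s1 => h.
      by rewrite (ar5 h).
    rewrite {1}/avg_over eqxx; apply: avg_gt => // z; rewrite inE => /andP[_ zK]; exact: hvK.
  have hs2 : (2 <= #|C :&: K|)%N by rewrite ltn_neqAle eq_sym s2 hs1.
  have hCKx : (C :&: K) :\ x != set0.
    rewrite -card_gt0; have := cardsD1 x (C :&: K); rewrite hx => h.
    exact: ar4 h hs2.
  have := cardsD1 x (C :&: K); rewrite hx => /ar7 cCK.
  have := cardsD1 x K; rewrite xK => /ar7 cK.
  have avC : avgF e x C = ((((n + 1) * ((#|C :&: K| - 1) * (#|C :&: K| - 1) + #|Bs C|))%N)%:R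
       - (((#|C :&: K| - 1) * (#|C| - 1))%N)%:R) / (#|C :&: K| - 1)%:R.
    rewrite /avgF eF avg_sum // cCK; congr (_ / _).
    have vx := val_K xC xK; rewrite ex0 addn0 in vx.
    rewrite -[in RHS](natsub4 (ar8 _ _ _ hs1)) -sum_K -vx.
    by rewrite (big_setD1 x hx) /= addrC addrK.
  have avP : avgF e x P = ((((n + 1) * ((#|K| - 1) * (#|K| - 1) + d))%N)%:R
       - (((#|K| - 1) * (#|P| - 1))%N)%:R) / (#|K| - 1)%:R.
    rewrite /avgF eFP avg_sum // cK; congr (_ / _).
    have vx := val_K (inKP xK) xK; rewrite PKI ex0 addn0 in vx.
    rewrite -[in RHS](natsub4 (ar8 _ _ _ hK1)) -hsumP -vx.
    by rewrite (big_setD1 x xK) /= addrC addrK.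
  have [es|nes] := eqVneq #|C :&: K| #|K|; last first.
    apply: ltW; apply: (AL_lt eirr) => //; rewrite avC avP.
    apply: cross_lt; [exact: ar9 | exact: ar9 (ar_k2 hk) |].
    by apply: ALb' => //; [rewrite hs2 hsk | left; rewrite ltn_neqAle nes hsk].
  have [eE|neE] := eqVneq #|Bs C| d; last first.
    apply: ltW; apply: (AL_lt eirr) => //; rewrite avC avP.
    apply: cross_lt; [exact: ar9 | exact: ar9 (ar_k2 hk) |].
    by apply: ALb' => //; [rewrite hs2 hsk | right; rewrite ltn_neqAle neE hEd].
  have hc := hexc es eE.
  apply: lerD.
    rewrite !val_K ?inKP // PKI !ex0 !addn0 es.
    by rewrite lerD2l lerN2 ler_nat leq_sub2r.
  apply: ler_wpM2l => //; rewrite avC avP es eE.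
  apply: cross_le; [exact: ar9 (ar_k2 hk) | exact: ar9 (ar_k2 hk) |].
  rewrite leq_add2l; apply: leq_mul => //; apply: leq_mul => //; exact: leq_sub2r.
have hsub : C :&: K \subset Fr.
  apply/subsetP => z hz; move/exists_inPn: hB => /(_ z hz); by rewrite negbK.
move: (hx0); rewrite inE => /andP[xC xK].
have xF : x0 \in Fr := subsetP hsub x0 hx0.
have [hm hmK hmp hmpe] := hmu xF.
have emx : e x0 (mu x0) by rewrite hE ?hm // xF eqxx orbT.
exists x0; split => //.
have vmu : ((n + 1)%N)%:R - ((#|P| - 1)%N)%:R <= vl e (mu x0) P.
  rewrite val_in // lerD2r ler_nat leq_pmulr //.
  by rewrite card_gt0; apply/set0Pn; exists p; rewrite !inE hpP hmpe.
have bound := fr_bound xC xF hsub.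
have B0 : 0 <= ((n * (d + 1))%N)%:R :> rat by exact: ler0n.
have vxP := val_K (inKP xK) xK; rewrite PKI /ex xF hm /= in vxP.
have := cardsD1 x0 K; rewrite xK => /ar7 cK.
case: kind {Hb hblk} => /=.
  rewrite /avgFi; apply: ltW; apply: le_lt_trans (avg_le B0 bound) _.
  have ne : mu x0 |: K != set0 by apply/set0Pn; exists (mu x0); rewrite setU11.
  have cU : #|mu x0 |: K| = #|K|.+1 by rewrite cardsU1 hmK.
  rewrite setFi_fr // avg_sum // (big_setU1 _ hmK) /= hsumP cU.
  rewrite ltr_pdivlMr ?ltr0n // -natrM.
  have := EQc' _ _ _ _ hd hk hN hNP hn; rewrite -(ltr_nat rat) !natrD.
  move: vmu. lra.
apply: ltW; apply: (AL_lt eirr) => //; rewrite /avgF.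
apply: le_lt_trans (avg_le B0 (fun z hz => bound z (setU1r x0 hz))) _.
have hmK' : mu x0 \notin K :\ x0 by rewrite !inE negb_and hmK orbT.
have ne : mu x0 |: (K :\ x0) != set0 by apply/set0Pn; exists (mu x0); rewrite setU11.
have cU : #|mu x0 |: (K :\ x0)| = #|K| by rewrite cardsU1 hmK' cK; exact: ar10.
have sKx : \sum_(i in K :\ x0) vl e i P = \sum_(i in K) vl e i P - vl e x0 P.
  by rewrite [in RHS](big_setD1 x0 xK) /= addrC addrK.
rewrite setF_fr // avg_sum // (big_setU1 _ hmK') /= sKx hsumP vxP cU.
rewrite ltr_pdivlMr ?ltr0n ?ar11 // -natrM.
have := ALc' _ _ _ _ hd hk hN hNP hn; rewrite -(ltr_nat rat) !natrD.
move: vmu. lra.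
Qed.
End Gadget.

Lemma arF1 d k' K : (2 * d + 3 < k')%N -> K = (k' - d - 1)%N -> (d + 3 <= K)%N. Proof. lia. Qed.
Lemma arF2 d k' K n : (2 * d + 3 < k')%N -> K = (k' - d - 1)%N -> (k' * (d + 1) <= n)%N ->
  ((K + d + 1) * (d + 1) <= n)%N.
Proof. move=> h1 h2; have -> : (K + d + 1 = k')%N by lia. by []. Qed.

Unset Implicit Arguments.
Set Strict Implicit.
Set Printing Implicit Defensive.

Theorem proposition1 (T : finType) (e : rel T) (kind : ahg_kind) (w : rat)
    (d k' : nat) (P : {set T}) (p : T) (K : {set T})
    (Gamma : {set {set T}}) (C : {set T}) :
  symmetric e -> irreflexive e ->
  (1 <= d)%N -> (2 * d + 3 < k')%N ->
  (k' * (d + 1) <= #|T|)%N ->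
  ((#|T| ^ 4)%N)%:R <= w ->
  dome_gadget e d k' P p K \/ pinched_dome_gadget e d k' P p K ->
  (forall x y, x \in P -> x != p -> e x y -> y \in P) ->
  partition Gamma [set: T] -> P \in Gamma ->
  blocks e kind w Gamma C ->
  [disjoint C & K].
Proof.
move=> hsym eirr hd hdk hn hw [G|G] hout hpart hPG hbl.
- case: G => m [f [minj [finj [hmf [hpK [hK [hP hedge]]]]]]].
  set M := [set m j | j : 'I_d].
  set Fr := [set f j | j : 'I_d].
  pose mu y := if [pick j | f j == y] is Some j then m j else p.
  have muf : forall j, mu (f j) = m j.
    move=> j; rewrite /mu; case: pickP => [j' /eqP/finj -> //|H].
    by have := H j; rewrite eqxx.
  have hpP : p \in P by rewrite hP setU11.
  have hKP : K \subset P by rewrite hP; apply/subsetP => z zK; rewrite !inE zK !orbT.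
  have hMP : forall j, m j \in P by move=> j; rewrite hP !inE mem_imset ?orbT.
  have hFrK : Fr \subset K by apply/subsetP => z /imsetP[j _ ->]; case: (hmf j) => _ [].
  have hFrd : #|Fr| = d by rewrite card_imset // ?cardsT card_ord.
  have yM : forall y, y \in K -> y \notin M.
    move=> y yK; apply/imsetP => [[j _ eyj]]; case: (hmf j) => _ [hmK _].
    by move: hmK; rewrite -eyj yK.
  have yp : forall y, y \in K -> (y == p) = false.
    by move=> y yK; apply/negbTE; apply: contraTneq yK => ->.
  have hE : forall y z, y \in K -> z \in P ->
      e y z = ((z \in K) && (z != y)) || ((y \in Fr) && (z == mu y)).
    move=> y z yK zP; have yP := subsetP hKP y yK.
    rewrite hedge // (yp y yK) (negbTE (yM y yK)) /= andbF /=.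
    have -> : [exists j, (y == m j) && (z == f j)] = false.
      apply/negbTE/existsP => [[j /andP[/eqP eyj _]]].
      by have := yM y yK; rewrite eyj mem_imset.
    have -> : [exists j, (z == m j) && (y == f j)] = (y \in Fr) && (z == mu y).
      apply/existsP/andP => [[j /andP[/eqP -> /eqP ->]]|[/imsetP[j _ ->] /eqP ->]].
        by rewrite mem_imset // muf.
      by exists j; rewrite muf !eqxx.
    by rewrite yK /= (eq_sym y z) orbC.
  have hmu : forall y, y \in Fr -> [/\ mu y \in P, mu y \notin K, mu y != p & e (mu y) p].
    move=> y /imsetP[j _ ->]; rewrite muf; case: (hmf j) => hmp [hmK _].
    split; [exact: hMP | by [] | by [] |].
    by rewrite hedge ?hMP // eqxx mem_imset ?orbT.
  have hmid : forall z, z \in P -> z != p -> z \notin K -> exists2 y, y \in Fr & z = mu y.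
    move=> z; rewrite hP !inE => /orP[->//|/orP[/imsetP[j _ ->] _ _|->//]].
    by exists (f j); rewrite ?mem_imset ?muf.
  have hmidF : forall z u, z \in P -> z != p -> z \notin K -> u \in P -> e z u -> (u == p) || (u \in Fr).
    move=> z u zP zp zK uP; rewrite hedge // (negbTE zp) (negbTE zK) /=.
    case/orP => [/andP[-> _] //|]; case/orP => [/existsP[j /andP[_ /eqP ->]]|]; first by rewrite mem_imset ?orbT.
    case/orP => [/existsP[j /andP[_ /eqP ezj]]|//].
    by case: (hmf j) => _ [_ hfK]; move: zK; rewrite ezj hfK.
  have hN : (#|P| <= #|K| + d + 1)%N.
    rewrite hP; apply: leq_trans (leq_card_setU _ _) _.
    rewrite cards1; apply: leq_trans (leq_add (leqnn 1) (leq_card_setU _ _)) _.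
    have : (#|M| <= d)%N by apply: leq_trans (leq_imset_card _ _) _; rewrite ?cardsT card_ord.
    move=> hM; rewrite -/M; lia.
  exact: (gadget_main eirr hpP hKP hpK hFrK hFrd hE hmu hmid hmidF hout hd (arF1 hdk hK) hN (arF2 hdk hK hn) hw hpart hPG hbl).
- case: G => q [f [finj [hqp [hqK [hpK [hfK [hK [hP hedge]]]]]]]].
  set Fr := [set f j | j : 'I_d].
  pose mu (y : T) := q.
  have hpP : p \in P by rewrite hP setU11.
  have hqP : q \in P by rewrite hP !inE eqxx orbT.
  have hKP : K \subset P by rewrite hP; apply/subsetP => z zK; rewrite !inE zK !orbT.
  have hFrK : Fr \subset K by apply/subsetP => z /imsetP[j _ ->].
  have hFrd : #|Fr| = d by rewrite card_imset // ?cardsT card_ord.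
  have yp : forall y, y \in K -> (y == p) = false.
    by move=> y yK; apply/negbTE; apply: contraTneq yK => ->.
  have yq : forall y, y \in K -> (y == q) = false.
    by move=> y yK; apply/negbTE; apply: contraTneq yK => ->.
  have hE : forall y z, y \in K -> z \in P ->
      e y z = ((z \in K) && (z != y)) || ((y \in Fr) && (z == mu y)).
    move=> y z yK zP; have yP := subsetP hKP y yK.
    rewrite hedge // (yp y yK) (yq y yK) /= !andbF /=.
    rewrite yK /= (eq_sym y z) orbC; congr (_ || _); exact: andbC.
  have hmu : forall y, y \in Fr -> [/\ mu y \in P, mu y \notin K, mu y != p & e (mu y) p].
    move=> y _; rewrite /mu; split => //.
    by rewrite hedge // !eqxx orbT.
  have hmid : forall z, z \in P -> z != p -> z \notin K -> exists2 y, y \in Fr & z = mu y.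
    move=> z; rewrite hP !inE => /orP[->//|/orP[/eqP -> _ _|->//]].
    have [y hy] : exists y, y \in Fr by apply/set0Pn; rewrite -card_gt0 hFrd.
    by exists y.
  have hmidF : forall z u, z \in P -> z != p -> z \notin K -> u \in P -> e z u -> (u == p) || (u \in Fr).
    move=> z u zP zp zK uP ez.
    have zq : z = q.
      move: zP; rewrite hP !inE => /orP[/eqP ezp|/orP[/eqP //|zK']].
        by rewrite ezp eqxx in zp.
      by rewrite zK' in zK.
    subst z; move: ez; rewrite hedge // (negbTE hqp) eqxx /=.
    case/orP => [/andP[-> _]//|]; case/orP => [->|]; first by rewrite orbT.
    case/orP => [/andP[_ hqF]|/and3P[]]; last by rewrite (negbTE hqK).
    by move: hqK; rewrite (subsetP hFrK _ hqF).
  have hN : (#|P| <= #|K| + d + 1)%N.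
    rewrite hP; apply: leq_trans (leq_card_setU _ _) _.
    rewrite cards1; apply: leq_trans (leq_add (leqnn 1) (leq_card_setU _ _)) _.
    rewrite cards1. lia.
  exact: (gadget_main eirr hpP hKP hpK hFrK hFrd hE hmu hmid hmidF hout hd (arF1 hdk hK) hN (arF2 hdk hK hn) hw hpart hPG hbl).
Qed.
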